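(* Let $A\in H_n$ and $B\in H_k$ be neither positive semidefinite nor negative semidefinite, with $\|A_+\|_\infty\geq\|B_+\|_\infty$ and $\|A_-\|_\infty\geq\|B_-\|_\infty$. Then there exists a positive unital linear map $\Phi:H_n\to H_k$ such that $\Phi(A)=B$.
   Context: $H_n$ denotes the $n\times n$ complex Hermitian matrices. A linear map $\Phi:H_n\to H_k$ is positive if it maps positive semidefinite matrices to positive semidefinite matrices and unital if $\Phi(\mathbb{1})=\mathbb{1}$. Every $A$ decomposes uniquely as $A=A_+-A_-$ with $A_\pm$ positive semidefinite and $A_+A_-=0$. $\|\cdot\|_\infty$ is the operator norm. *)

(* Defs.v *)
From HB Require Import structures.
From mathcomp Require Import all_boot all_order all_algebra.
From mathcomp Require Import complex.
From mathcomp Require Import reals classical_sets.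
Set Implicit Arguments.
Unset Strict Implicit.
Unset Printing Implicit Defensive.
Import Order.TTheory GRing.Theory Num.Theory.
Local Open Scope ring_scope.
Local Open Scope classical_set_scope.

Section Defs.
Variable R : realType.
Local Notation C := R[i].

Definition adjmx m n (M : 'M[C]_(m, n)) : 'M[C]_(n, m) := map_mx Num.conj M^T.

Definition herm n (A : 'M[C]_n) : Prop := A \is hermsymmx.

Definition psd n (A : 'M[C]_n) : Prop :=
  herm A /\ forall v : 'cV[C]_n, 0 <= (adjmx v *m A *m v) 0 0.

Definition nsd n (A : 'M[C]_n) : Prop := psd (- A).

Definition vnorm n (v : 'cV[C]_n) : R :=
  Num.sqrt (\sum_(i < n) ((complex.Re (v i 0)) ^+ 2 + (complex.Im (v i 0)) ^+ 2)).

Definition opnorm m n (M : 'M[C]_(m, n)) : R :=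
  sup [set vnorm (M *m v) | v in [set v : 'cV[C]_n | vnorm v <= 1]].

Definition jordan_decomp n (A Ap Am : 'M[C]_n) : Prop :=
  [/\ psd Ap, psd Am, A = Ap - Am & Ap *m Am = 0].

(* Phi : H_n -> H_k, represented as a function on all matrices whose values
   outside H_n are irrelevant: it maps H_n into H_k and is R-linear on H_n. *)
Definition herm_linear n k (Phi : 'M[C]_n -> 'M[C]_k) : Prop :=
  (forall X, herm X -> herm (Phi X)) /\
  (forall (r : R) (X Y : 'M[C]_n), herm X -> herm Y ->
     Phi ((r%:C)%C *: X + Y) = (r%:C)%C *: Phi X + Phi Y).

Definition positive_map n k (Phi : 'M[C]_n -> 'M[C]_k) : Prop :=
  forall X, psd X -> psd (Phi X).

Definition unital_map n k (Phi : 'M[C]_n -> 'M[C]_k) : Prop :=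
  Phi 1%:M = 1%:M.

End Defs.

(* Main.v *)
Require Import Defs.
From HB Require Import structures.
From mathcomp Require Import all_boot all_order all_algebra.
From mathcomp Require Import complex.
From mathcomp Require Import reals classical_sets.
From mathcomp Require Import ring.
Import Order.TTheory GRing.Theory Num.Theory Num.Def.
Local Open Scope ring_scope.

Set Implicit Arguments.
Unset Strict Implicit.
Section Aux.
Local Open Scope sesquilinear_scope.
Local Open Scope classical_set_scope.
Variable R : realType.
Local Notation C := R[i].

Lemma adjmxK m n (M : 'M[C]_(m, n)) : adjmx (adjmx M) = M.
Proof. exact: trmxCK. Qed.

Lemma adjmx_mul m n p (A : 'M[C]_(m, n)) (B : 'M[C]_(n, p)) :
  adjmx (A *m B) = adjmx B *m adjmx A.
Proof. by rewrite /adjmx trmx_mul map_mxM. Qed.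

Lemma adjmxD m n (A B : 'M[C]_(m, n)) : adjmx (A + B) = adjmx A + adjmx B.
Proof. by rewrite /adjmx linearD /= map_mxD. Qed.

Lemma adjmxZ m n (c : C) (A : 'M[C]_(m, n)) : adjmx (c *: A) = c^* *: adjmx A.
Proof. by apply/matrixP=> i j; rewrite !mxE rmorphM. Qed.

Lemma adjmx1 n : adjmx (1%:M : 'M[C]_n) = 1%:M.
Proof. by rewrite /adjmx trmx1 map_mx1. Qed.

Lemma hermE n (M : 'M[C]_n) : herm M <-> adjmx M = M.
Proof.
rewrite /herm; split; first by move/is_hermitianmxP; rewrite expr0 scale1r.
by move=> h; apply/is_hermitianmxP; rewrite expr0 scale1r; exact: (esym h).
Qed.

Lemma conj11 m n (u : 'cV[C]_m) (M : 'M[C]_(m, n)) (v : 'cV[C]_n) :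
  ((adjmx u *m M *m v) 0 0)^* = (adjmx v *m adjmx M *m u) 0 0.
Proof.
have -> : ((adjmx u *m M *m v) 0 0)^* = adjmx (adjmx u *m M *m v) 0 0.
  by rewrite !mxE.
by rewrite !adjmx_mul adjmxK mulmxA.
Qed.

Lemma unitary_adj n (U : 'M[C]_n) : U \is unitarymx ->
  U *m adjmx U = 1%:M /\ adjmx U *m U = 1%:M.
Proof.
move=> Uu; split; first exact/unitarymxP.
by have := @mulmxKtV _ n n n 1%:M U Uu erefl; rewrite mul1mx.
Qed.

Lemma qdiag n (D : 'rV[C]_n) (w : 'cV[C]_n) :
  (adjmx w *m diag_mx D *m w) 0 0 = \sum_j D 0 j * (w j 0 * (w j 0)^*).
Proof.
rewrite mxE; apply: eq_bigr => j _; rewrite mul_mx_diag !mxE; ring.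
Qed.

Lemma qid n (w : 'cV[C]_n) :
  (adjmx w *m w) 0 0 = \sum_j (w j 0 * (w j 0)^*).
Proof. rewrite mxE; apply: eq_bigr => j _; rewrite !mxE; ring. Qed.

Lemma qge0 n (w : 'cV[C]_n) : 0 <= (adjmx w *m w) 0 0.
Proof. by rewrite qid sumr_ge0 // => j _; exact: mul_conjC_ge0. Qed.

Lemma quad_le n (U : 'M[C]_n) (D : 'rV[C]_n) (c : C) (v : 'cV[C]_n) :
  U \is unitarymx -> (forall j, D 0 j <= c) ->
  (adjmx v *m (adjmx U *m diag_mx D *m U) *m v) 0 0 <= c * (adjmx v *m v) 0 0.
Proof.
move=> /unitary_adj [_ H] Dc.
have -> : adjmx v *m (adjmx U *m diag_mx D *m U) *m v
  = adjmx (U *m v) *m diag_mx D *m (U *m v) by rewrite adjmx_mul !mulmxA.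
have -> : adjmx v *m v = adjmx (U *m v) *m (U *m v).
  by rewrite adjmx_mul mulmxA -(mulmxA (adjmx v)) H mulmx1.
rewrite qdiag qid mulr_sumr; apply: ler_sum => j _.
by apply: ler_wpM2r => //; exact: mul_conjC_ge0.
Qed.

Lemma quad_ge n (U : 'M[C]_n) (D : 'rV[C]_n) (v : 'cV[C]_n) :
  (forall j, 0 <= D 0 j) ->
  0 <= (adjmx v *m (adjmx U *m diag_mx D *m U) *m v) 0 0.
Proof.
move=> D0.
have -> : adjmx v *m (adjmx U *m diag_mx D *m U) *m v
  = adjmx (U *m v) *m diag_mx D *m (U *m v) by rewrite adjmx_mul !mulmxA.
rewrite qdiag sumr_ge0 // => j _; apply: mulr_ge0 => //; exact: mul_conjC_ge0.
Qed.

Lemma herm_spec n (P : 'M[C]_n) : herm P -> exists (U : 'M[C]_n) (D : 'rV[C]_n),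
  [/\ U \is unitarymx, P = adjmx U *m diag_mx D *m U & forall j, D 0 j \is Num.real].
Proof.
move=> Ph; exists (spectralmx P), (spectral_diag P); split.
- exact: spectral_unitarymx.
- have := hermitian_normalmx Ph => /orthomx_spectralP {1}->.
  by rewrite invmx_unitary // spectral_unitarymx.
- by move=> j; have /mxOverP := hermitian_spectral_diag_real Ph; apply.
Qed.

Lemma diag_delta n (D : 'rV[C]_n) j :
  diag_mx D *m delta_mx j (0 : 'I_1) = D 0 j *: delta_mx j 0.
Proof.
apply/matrixP=> a b; rewrite mul_diag_mx !mxE.
by case: (eqVneq a j) => [->|]; rewrite ?mulr0 ?mulr1 //= andbF mulr0.
Qed.

Lemma eig n (U : 'M[C]_n) (D : 'rV[C]_n) j (u := adjmx U *m delta_mx j (0 : 'I_1)) :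
  U \is unitarymx ->
  (adjmx U *m diag_mx D *m U) *m u = D 0 j *: u /\ adjmx u *m u = 1%:M.
Proof.
move=> /unitary_adj [H1 H2]; split.
  by rewrite /u -!mulmxA (mulmxA U) H1 mul1mx diag_delta -scalemxAr.
rewrite /u adjmx_mul adjmxK mulmxA -(mulmxA _ U) H1 mulmx1.
apply/matrixP=> a b; rewrite !ord1 !mxE (bigD1 j) //= big1 ?addr0.
  by rewrite !mxE !eqxx /= mulr1 conjC1.
by move=> i /negbTE ne; rewrite !mxE ne /= mulr0.
Qed.
Lemma vnormE n (v : 'cV[C]_n) : ((vnorm v) ^+ 2)%:C%C = (adjmx v *m v) 0 0.
Proof.
rewrite /vnorm sqr_sqrtr; last first.
  by apply: sumr_ge0 => i _; apply: addr_ge0; apply: sqr_ge0.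
rewrite qid rmorph_sum; apply: eq_bigr => i _.
case: (v i 0) => a b /=; apply/eqP; rewrite eq_complex /=; simpc.
by rewrite /= [b * a]mulrC addNr.
Qed.

Lemma vnorm_ge0 n (v : 'cV[C]_n) : 0 <= vnorm v.
Proof. exact: sqrtr_ge0. Qed.

Lemma psd_top m (P : 'M[C]_m.+1) : psd P -> exists (u : 'cV[C]_m.+1) (d : R),
  [/\ P *m u = d%:C%C *: u, adjmx u *m u = 1%:M, opnorm P = d, 0 <= d &
     (forall v : 'cV[C]_m.+1, (adjmx v *m P *m v) 0 0 <= d%:C%C * (adjmx v *m v) 0 0)
   /\ (d = 0 -> P = 0)].
Proof.
move=> [Ph Ppsd]; have [U [D [Uu PE Dr]]] := herm_spec Ph.
have D0 : forall j, 0 <= D 0 j.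
  move=> j; have [E1 E2] := eig D j Uu; have := Ppsd (adjmx U *m delta_mx j 0).
  by rewrite -mulmxA PE E1 -scalemxAr E2 !mxE eqxx mulr1.
have DR : forall j, D 0 j = (complex.Re (D 0 j))%:C%C by move=> j; rewrite RRe_real.
pose i0 := Order.arg_max (ord0 : 'I_m.+1) xpredT (fun i => complex.Re (D 0 i)).
have Dmax : forall j, complex.Re (D 0 j) <= complex.Re (D 0 i0).
  by rewrite /i0; case: arg_maxP => //= i _ H j; apply: H.
set d := complex.Re (D 0 i0).
have Dle : forall j, D 0 j <= d%:C%C by move=> j; rewrite DR lecR.
have d0 : 0 <= d by rewrite -ler0c -DR.
have [E1 E2] := eig D i0 Uu; set u := adjmx U *m delta_mx i0 0 in E1 E2.
have Pu : P *m u = d%:C%C *: u by rewrite PE E1 -DR.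
have vn_u : vnorm u = 1.
  apply/eqP; rewrite -(eqrXn2 (n:=2)) // ?vnorm_ge0 // expr1n.
  by apply/eqP/complexI; rewrite vnormE E2 mxE.
have quad : forall v : 'cV[C]_m.+1, (adjmx v *m P *m v) 0 0 <= d%:C%C * (adjmx v *m v) 0 0.
  by move=> v; rewrite PE; exact: quad_le.
have PP : adjmx P *m P = adjmx U *m diag_mx (\row_j (D 0 j ^+ 2)) *m U.
  have [H1 _] := unitary_adj Uu.
  rewrite (proj1 (hermE P) Ph) {1 2}PE !mulmxA -(mulmxA _ U) H1 mulmx1.
  congr (_ *m _); rewrite -mulmxA; congr (_ *m _).
  by apply/matrixP=> a b; rewrite mul_diag_mx !mxE; case: (a == b); rewrite /= ?mulr1n ?mulr0n ?mulr0 // expr2.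
have ub : ubound [set vnorm (P *m v) | v in [set v : 'cV[C]_m.+1 | vnorm v <= 1]] d.
  move=> x [v /= vle1 <-].
  rewrite -(ler_pXn2r (n:=2)) // ?nnegrE ?vnorm_ge0 //.
  have : (vnorm (P *m v) ^+ 2)%:C%C <= (d ^+ 2)%:C%C * (vnorm v ^+ 2)%:C%C.
    rewrite vnormE vnormE adjmx_mul mulmxA -(mulmxA (adjmx v)) PP.
    apply: quad_le => // j; rewrite mxE rmorphXn /=.
    by rewrite expr2 expr2; apply: ler_pM.
  rewrite -rmorphM lecR => /le_trans; apply.
  rewrite -[X in _ <= X]mulr1; apply: ler_wpM2l; first exact: sqr_ge0.
  rewrite -(expr1n _ 2); apply: lerXn2r => //; rewrite ?nnegrE ?vnorm_ge0 //.
have inS : [set vnorm (P *m v) | v in [set v : 'cV[C]_m.+1 | vnorm v <= 1]] d.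
  exists u; first by rewrite /= vn_u.
  apply/eqP; rewrite -(eqrXn2 (n:=2)) // ?vnorm_ge0 //.
  apply/eqP/complexI; rewrite vnormE Pu adjmxZ -scalemxAl -scalemxAr.
  have cd : conjC (d%:C%C) = d%:C%C by exact: conjc_real.
  by rewrite scalerA E2 !mxE eqxx mulr1 cd rmorphXn /= expr2.
exists u, d; split => //; last split => //.
- apply/le_anti/andP; split; first by apply: ge_sup => //; exists d.
  by apply: ub_le_sup => //; exists d.
- move=> dz; rewrite PE.
  have -> : diag_mx D = 0 :> 'M[C]_m.+1.
    apply/matrixP=> a b; rewrite !mxE.
    have -> : D 0 a = 0 by apply/le_anti; rewrite D0 andbT; have := Dle a; rewrite dz rmorph0.
    by rewrite mul0rn.
  by rewrite mulmx0 mul0mx.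
Qed.
Section Q.
Variable m : nat.
Implicit Types (M N : 'M[C]_m) (v : 'cV[C]_m).
Lemma qD M N v : (adjmx v *m (M + N) *m v) 0 0
  = (adjmx v *m M *m v) 0 0 + (adjmx v *m N *m v) 0 0.
Proof. by rewrite mulmxDr mulmxDl mxE. Qed.
Lemma qZ (c : C) M v : (adjmx v *m (c *: M) *m v) 0 0 = c * (adjmx v *m M *m v) 0 0.
Proof. by rewrite -scalemxAr -scalemxAl mxE. Qed.
Lemma qN M v : (adjmx v *m (- M) *m v) 0 0 = - (adjmx v *m M *m v) 0 0.
Proof. by rewrite mulmxN mulNmx mxE. Qed.
Lemma q1 v : (adjmx v *m 1%:M *m v) 0 0 = (adjmx v *m v) 0 0.
Proof. by rewrite mulmx1. Qed.
Lemma qeig M v (c : C) : M *m v = c *: v ->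
  (adjmx v *m M *m v) 0 0 = c * (adjmx v *m v) 0 0.
Proof. by move=> h; rewrite -mulmxA h -scalemxAr mxE. Qed.
End Q.

Lemma psd0 m : psd (0 : 'M[C]_m).
Proof.
split; first by apply/hermE; apply/matrixP=> i j; rewrite !mxE rmorph0.
by move=> v; rewrite mulmx0 mul0mx mxE.
Qed.

Lemma psd_bound m (P : 'M[C]_m) : psd P ->
  forall v : 'cV[C]_m, (adjmx v *m P *m v) 0 0 <= (opnorm P)%:C%C * (adjmx v *m v) 0 0.
Proof.
case: m P => [|m] P Pp v.
  by rewrite !mxE !big_ord0 mulr0.
have [u [d [_ _ -> _ [H _]]]] := psd_top Pp; exact: H.
Qed.
End Aux.

Unset Implicit Arguments.
Set Strict Implicit.

Theorem mainTheorem11 (R : realType) (n k : nat)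
  (A : 'M[R[i]]_n) (B : 'M[R[i]]_k)
  (Ap Am : 'M[R[i]]_n) (Bp Bm : 'M[R[i]]_k) :
  herm A -> herm B ->
  ~ psd A -> ~ nsd A -> ~ psd B -> ~ nsd B ->
  jordan_decomp A Ap Am -> jordan_decomp B Bp Bm ->
  opnorm Bp <= opnorm Ap -> opnorm Bm <= opnorm Am ->
  exists Phi : 'M[R[i]]_n -> 'M[R[i]]_k,
    [/\ herm_linear Phi, positive_map Phi, unital_map Phi & Phi A = B].
Proof.
move=> hA hB npA nnA _ _ [pAp pAm AE ApAm] [pBp pBm BE _] lep lem.
case: n A Ap Am hA npA nnA pAp pAm AE ApAm lep lem => [|n] A Ap Am hA npA nnA pAp pAm AE ApAm lep lem.
  exfalso; apply: npA; have -> : A = 0 by apply/matrixP => -[]. 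
  exact: psd0.
have [u1 [d1 [Pu1 N1 O1 d1p [_ Z1]]]] := psd_top pAp.
have [u2 [d2 [Pu2 N2 O2 d2p [_ Z2]]]] := psd_top pAm.
have hle1 : opnorm Bp <= d1 by rewrite -O1.
have hle2 : opnorm Bm <= d2 by rewrite -O2.
have d1n : d1 != 0.
  apply/eqP=> /Z1 Ap0; apply: nnA; rewrite /nsd AE Ap0 sub0r opprK //.
have d2n : d2 != 0.
  apply/eqP=> /Z2 Am0; apply: npA; rewrite AE Am0 subr0 //.
have hAm : adjmx Am = Am by apply/hermE; case: pAm.
have hAp : adjmx Ap = Ap by apply/hermE; case: pAp.
have AmAp : Am *m Ap = 0.
  by rewrite -hAm -hAp -adjmx_mul ApAm; apply/matrixP=> i j; rewrite !mxE rmorph0.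
have Am1 : Am *m u1 = 0.
  have : Am *m (Ap *m u1) = 0 by rewrite mulmxA AmAp mul0mx.
  rewrite Pu1 -scalemxAr => /eqP; rewrite scaler_eq0 => /orP [/eqP h|/eqP //].
  by move: d1n; rewrite (@complexI _ _ 0 (h : _ = 0%:C%C)) eqxx.
have Ap2 : Ap *m u2 = 0.
  have : Ap *m (Am *m u2) = 0 by rewrite mulmxA ApAm mul0mx.
  rewrite Pu2 -scalemxAr => /eqP; rewrite scaler_eq0 => /orP [/eqP h|/eqP //].
  by move: d2n; rewrite (@complexI _ _ 0 (h : _ = 0%:C%C)) eqxx.
pose st : R[i] := d1%:C%C + d2%:C%C.
have stn : st != 0.
  rewrite /st -rmorphD /=; apply/eqP=> /(@complexI _ _ 0) /eqP.
  by rewrite (paddr_eq0 d1p d2p) (negbTE d1n).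
pose t : R[i] := st^-1.
have ht : t * st = 1 by rewrite mulVf.
have ct : t^* = t.
  have c1 : conjC (d1%:C%C : R[i]) = d1%:C%C by exact: conjc_real.
  have c2 : conjC (d2%:C%C : R[i]) = d2%:C%C by exact: conjc_real.
  by rewrite /t fmorphV /st rmorphD /= c1 c2.
have t0 : 0 <= t.
  have : 0 <= st by rewrite /st -rmorphD /= ler0c; exact: addr_ge0.
  by rewrite /t invr_ge0.
pose w1 (X : 'M[R[i]]_n.+1) : R[i] := (adjmx u1 *m X *m u1) 0 0.
pose w2 (X : 'M[R[i]]_n.+1) : R[i] := (adjmx u2 *m X *m u2) 0 0.
pose M1 : 'M[R[i]]_k := t *: (B + d2%:C%C *: 1%:M).
pose M2 : 'M[R[i]]_k := t *: (d1%:C%C *: 1%:M - B).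
have wl1 : forall r X Y, w1 (r *: X + Y) = r * w1 X + w1 Y by move=> r X Y; rewrite /w1 qD qZ.
have wl2 : forall r X Y, w2 (r *: X + Y) = r * w2 X + w2 Y by move=> r X Y; rewrite /w2 qD qZ.
have wr1 : forall X, herm X -> (w1 X)^* = w1 X by move=> X /hermE hX; rewrite /w1 conj11 hX.
have wr2 : forall X, herm X -> (w2 X)^* = w2 X by move=> X /hermE hX; rewrite /w2 conj11 hX.
have w11 : w1 1%:M = 1 by rewrite /w1 q1 N1 mxE.
have w21 : w2 1%:M = 1 by rewrite /w2 q1 N2 mxE.
have w1A : w1 A = d1%:C%C.
  rewrite /w1 AE qD qN (qeig Pu1) N1 -(mulmxA _ Am) Am1 mulmx0 !mxE mulr1 subr0 //.
have w2A : w2 A = - d2%:C%C.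
  rewrite /w2 AE qD qN (qeig Pu2) N2 -(mulmxA _ Ap) Ap2 mulmx0 !mxE mulr1 add0r //.
have c1 : conjC (d1%:C%C : R[i]) = d1%:C%C by exact: conjc_real.
have c2 : conjC (d2%:C%C : R[i]) = d2%:C%C by exact: conjc_real.
have hB' : adjmx B = B by apply/hermE.
have hM1 : adjmx M1 = M1 by rewrite /M1 adjmxZ ct adjmxD adjmxZ c2 adjmx1 hB'.
have hM2 : adjmx M2 = M2.
  by rewrite /M2 adjmxZ ct adjmxD adjmxZ c1 adjmx1 -scaleN1r adjmxZ hB' rmorphN1 scaleN1r.
have hPhi : forall X, herm X -> herm (w1 X *: M1 + w2 X *: M2).
  by move=> X hX; apply/hermE; rewrite adjmxD (adjmxZ (w1 X)) (adjmxZ (w2 X)) hM1 hM2 (wr1 _ hX) (wr2 _ hX).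
pose Phi : 'M[R[i]]_n.+1 -> 'M[R[i]]_k := fun X => w1 X *: M1 + w2 X *: M2.
have PhiE : forall X, Phi X = w1 X *: M1 + w2 X *: M2 by [].
clearbody Phi.
exists Phi; split.
- split; first by move=> X hX; rewrite PhiE; exact: (hPhi X hX).
  move=> r X Y _ _; rewrite !PhiE wl1 wl2.
  move: (w1 X) (w1 Y) (w2 X) (w2 Y) => a b c e; clearbody M1 M2.
  by rewrite !scalerDl scalerDr !scalerA addrACA.
- move=> X [hX pX]; split; first by rewrite PhiE; exact: (hPhi X hX).
  move=> v.
  have q0 := qge0 v.
  have gM1 : 0 <= (adjmx v *m M1 *m v) 0 0.
    rewrite /M1 qZ qD qZ q1 BE qD qN; apply: (mulr_ge0 t0).
    have h1 := psd_bound pBm v.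
    have h2 : (opnorm Bm)%:C%C * (adjmx v *m v) 0 0 <= d2%:C%C * (adjmx v *m v) 0 0.
      by apply: (ler_wpM2r q0); rewrite lecR; exact: hle2.
    rewrite -addrA; apply: addr_ge0; first by case: pBp.
    by rewrite addrC subr_ge0 (le_trans h1 h2).
  have gM2 : 0 <= (adjmx v *m M2 *m v) 0 0.
    rewrite /M2 qZ qD qZ q1 qN BE qD qN opprD opprK; apply: (mulr_ge0 t0).
    have h1 := psd_bound pBp v.
    have h2 : (opnorm Bp)%:C%C * (adjmx v *m v) 0 0 <= d1%:C%C * (adjmx v *m v) 0 0.
      by apply: (ler_wpM2r q0); rewrite lecR; exact: hle1.
    rewrite addrA; apply: addr_ge0; last by case: pBm.
    by rewrite subr_ge0 (le_trans h1 h2).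
  have g1 : 0 <= w1 X := pX u1.
  have g2 : 0 <= w2 X := pX u2.
  rewrite PhiE (qD (w1 X *: M1) (w2 X *: M2) v) (qZ (w1 X) M1 v) (qZ (w2 X) M2 v).
  exact: (addr_ge0 (mulr_ge0 g1 gM1) (mulr_ge0 g2 gM2)).
- rewrite /unital_map PhiE w11 w21 !scale1r; apply/matrixP=> i j; rewrite !mxE.
  transitivity (t * st * (i == j)%:R); first by rewrite /st; ring.
  by rewrite ht mul1r.
- rewrite PhiE w1A w2A; apply/matrixP=> i j; rewrite !mxE.
  transitivity (t * st * B i j); first by rewrite /st; ring.
  by rewrite ht mul1r.
Qed.
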